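(* Let $\mathcal{H}_{A_1},\mathcal{H}_{A_2}$ be finite-dimensional Hilbert spaces with fixed reference bases (and the product basis on $\mathcal{H}_{A_1}\otimes\mathcal{H}_{A_2}$). For all states $\rho_1$ on $\mathcal{H}_{A_1}$ and $\rho_2$ on $\mathcal{H}_{A_2}$, $$C_{\max}(\rho_1\otimes\rho_2)=C_{\max}(\rho_1)+C_{\max}(\rho_2).$$
   Context: $D_{\max}(\rho\|\sigma)=\min\{\lambda\ge0:\rho\leq2^\lambda\sigma\}$. $\mathcal{I}$ is the set of incoherent states (states diagonal in the reference basis), and the max-relative entropy of coherence is $C_{\max}(\rho)=\min_{\sigma\in\mathcal{I}}D_{\max}(\rho\|\sigma)$. *)

(* Defs.v *)
From HB Require Import structures.
From mathcomp Require Import all_boot all_order all_algebra.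
From mathcomp Require Import complex mxtens.
From mathcomp Require Import all_classical all_reals.
From mathcomp Require Import ereal exp.
Set Implicit Arguments. Unset Strict Implicit. Unset Printing Implicit Defensive.
Import Order.TTheory GRing.Theory Num.Theory.
Local Open Scope classical_set_scope.
Local Open Scope ring_scope.

Section Quantum.
Variable R : realType.
Local Notation C := (R[i]).

Definition adjmx m n (A : 'M[C]_(m, n)) : 'M[C]_(n, m) := (map_mx Num.conj A)^T.

Definition psd n (A : 'M[C]_n) : Prop :=
  forall v : 'cV[C]_n, 0 <= (adjmx v *m A *m v) 0 0.

Definition loewner n (A B : 'M[C]_n) : Prop := psd (B - A).

Definition is_state n (rho : 'M[C]_n) : Prop := psd rho /\ \tr rho = 1.

Definition incoherent n (sigma : 'M[C]_n) : Prop := is_state sigma /\ is_diag_mx sigma.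

Definition Dmax n (rho sigma : 'M[C]_n) : \bar R :=
  ereal_inf [set (l%:E) | l in
    [set l : R | 0 <= l /\ loewner rho (((2 : R) `^ l)%:C%C *: sigma)]].

Definition Cmax n (rho : 'M[C]_n) : \bar R :=
  ereal_inf [set Dmax rho sigma | sigma in [set s : 'M[C]_n | incoherent s]].

End Quantum.

(* Main.v *)
Require Import Defs.
From HB Require Import structures.
From mathcomp Require Import all_boot all_order all_algebra.
From mathcomp Require Import complex mxtens.
From mathcomp Require Import all_classical all_reals.
From mathcomp Require Import ereal exp.
From mathcomp Require Import ring lra.
Set Implicit Arguments. Unset Strict Implicit. Unset Printing Implicit Defensive.
Import Order.TTheory GRing.Theory Num.Theory.
Local Open Scope classical_set_scope.
Local Open Scope ring_scope.

Section S.
Variable R : realType.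
Local Notation C := (R[i]).

Definition feas n (rho : 'M[C]_n) (s : 'M[C]_n) (l : R) :=
  incoherent s /\ 0 <= l /\ loewner rho (((2 : R) `^ l)%:C%C *: s).

Lemma Cmax_le n (rho s : 'M[C]_n) l : feas rho s l -> (Cmax rho <= l%:E)%E.
Proof.
move=> [inc [l0 lw]].
apply: (@le_trans _ _ (Dmax rho s)).
  by apply: ereal_inf_lbound; exists s.
by apply: ereal_inf_lbound; exists l.
Qed.

Lemma Cmax_lt n (rho : 'M[C]_n) x : (Cmax rho < x)%E ->
  exists s l, feas rho s l /\ (l%:E < x)%E.
Proof.
move=> /ereal_inf_lt [y [s inc <-]] /ereal_inf_lt [z [l [l0 lw] <-]] lx.
by exists s, l.
Qed.

Lemma Cmax_ge n (rho : 'M[C]_n) x :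
  (forall s l, feas rho s l -> (x <= l%:E)%E) -> (x <= Cmax rho)%E.
Proof.
move=> H; apply: le_ereal_inf_tmp; rewrite /lbound /= => y [s inc <-].
apply: le_ereal_inf_tmp; rewrite /lbound /= => z [l [l0 lw] <-].
exact: (H s l (conj inc (conj l0 lw))).
Qed.

Lemma Cmax_ge0 n (rho : 'M[C]_n) : (0 <= Cmax rho)%E.
Proof. by apply: Cmax_ge => s l [_ [l0 _]]; rewrite lee_fin. Qed.

End S.

Section M.
Variable R : realType.
Local Notation C := (R[i]).

Definition q n (A : 'M[C]_n) (v : 'cV[C]_n) := (adjmx v *m A *m v) 0 0.

Lemma qE n (A : 'M[C]_n) v :
  q A v = \sum_j \sum_i Num.conj (v i 0) * A i j * v j 0.
Proof.
rewrite /q mxE; apply: eq_bigr => j _; rewrite mxE mulr_suml.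
by apply: eq_bigr => i _; rewrite !mxE.
Qed.

Lemma qB n (A B : 'M[C]_n) v : q (A - B) v = q A v - q B v.
Proof. by rewrite /q mulmxBr mulmxBl !mxE. Qed.

Lemma qZ n a (A : 'M[C]_n) v : q (a *: A) v = a * q A v.
Proof. by rewrite /q -scalemxAr -scalemxAl mxE. Qed.

Lemma loewnerP n (A B : 'M[C]_n) : loewner A B <-> forall v, q A v <= q B v.
Proof.
split => H v; first by have := H v; rewrite -/(q _ _) qB subr_ge0.
by rewrite -/(q _ _) qB subr_ge0.
Qed.

Lemma q_diag n (A : 'M[C]_n) v : (forall i j, i != j -> A i j = 0) ->
  q A v = \sum_i Num.conj (v i 0) * A i i * v i 0.
Proof.
move=> H; rewrite qE; apply: eq_bigr => j _.
rewrite (bigD1 j) //= big1 ?addr0 // => i ij.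
by rewrite H ?mulr0 ?mul0r.
Qed.

Lemma q_delta n (A : 'M[C]_n) k : q A (delta_mx k 0) = A k k.
Proof.
rewrite qE (bigD1 k) //= [X in _ + X]big1 ?addr0; last first.
  move=> j /negbTE jk; rewrite big1 // => i _.
  by rewrite !mxE jk /= mulr0.
rewrite (bigD1 k) //= big1 ?addr0; last first.
  by move=> i /negbTE ik; rewrite !mxE ik /= conjC0 !mul0r.
by rewrite !mxE !eqxx /= conjC1 mul1r mulr1.
Qed.

Lemma psd_diag n (A : 'M[C]_n) k : psd A -> 0 <= A k k.
Proof. by move=> H; have := H (delta_mx k 0); rewrite -/(q _ _) q_delta. Qed.

Lemma loewner_tr n (A B : 'M[C]_n) : loewner A B -> \tr A <= \tr B.
Proof.
move=> H; rewrite /mxtrace; apply: ler_sum => i _.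
by have := psd_diag i H; rewrite !mxE subr_ge0.
Qed.

Lemma q_diag_ge0 n (d : 'I_n -> C) v : (forall i, 0 <= d i) ->
  0 <= q (diag_mx (\row_i d i)) v.
Proof.
move=> H; rewrite q_diag; last by move=> i j /negbTE ij; rewrite !mxE ij.
apply: sumr_ge0 => i _; rewrite !mxE eqxx mulr1n mulrAC.
by apply: mulr_ge0 => //; rewrite mulrC; apply: mul_conjC_ge0.
Qed.

Lemma real_ge0 (z : C) : 0 <= z -> z = (complex.Re z)%:C%C.
Proof. by move=> /ger0_real /RRe_real ->. Qed.

Lemma KL n (rho : 'M[C]_n) (d : 'I_n -> C) : is_state rho ->
  (forall i, 0 <= d i) -> loewner rho (diag_mx (\row_i d i)) ->
  exists l, (Cmax rho <= l%:E)%E /\ ((2:R) `^ l)%:C%C = \sum_i d i.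
Proof.
move=> [psdr trr] d0 lw.
set D := diag_mx (\row_i d i).
have trD : \tr D = \sum_i d i by rewrite mxtrace_diag; apply: eq_bigr => i _; rewrite mxE.
have s1 : 1 <= \sum_i d i by rewrite -trD -trr; apply: loewner_tr.
set s := complex.Re (\sum_i d i).
have sE : s%:C%C = \sum_i d i.
  by rewrite /s -real_ge0 // (le_trans _ s1) // ler01.
have s1R : 1 <= s by rewrite -lecR sE.
have s0 : 0 < s by apply: lt_le_trans s1R; apply: ltr01.
have ln2 : 0 < ln (2:R) by apply: ln_gt0; apply: ltr1n.
set l := ln s / ln 2.
have pw : (2:R) `^ l = s.
  rewrite /powR pnatr_eq0 /= /l divfK ?gt_eqF //.
  by rewrite lnK // posrE.
exists l; split; last by rewrite pw sE.
apply: (@Cmax_le R n rho ((s^-1)%:C%C *: D)).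
split; [split; [split|] | split].
- move=> v; rewrite -/(q _ _) qZ; apply: mulr_ge0; last exact: q_diag_ge0.
  by rewrite ler0c invr_ge0 ltW.
- by rewrite mxtraceZ trD -sE -rmorphM mulVf ?gt_eqF.
- apply/is_diag_mxP => i j ij; rewrite !mxE.
  have -> : (i == j) = false by apply/eqP => E; move: ij; rewrite E eqxx.
  by rewrite mulr0n mulr0.
- by apply: divr_ge0; [apply: ln_ge0 | apply: ltW].
- by rewrite pw scalerA -rmorphM divff ?gt_eqF // scale1r.
Qed.

End M.

Section G.
Variable R : realType.
Local Notation C := (R[i]).

Lemma adjmxE m n (A : 'M[C]_(m, n)) i j : adjmx A i j = Num.conj (A j i).
Proof. by rewrite !mxE. Qed.

Lemma adjmxK m n (A : 'M[C]_(m, n)) : adjmx (adjmx A) = A.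
Proof. by apply/matrixP => i j; rewrite !adjmxE conjCK. Qed.

Lemma adjmxM m n p (A : 'M[C]_(m, n)) (B : 'M[C]_(n, p)) :
  adjmx (A *m B) = adjmx B *m adjmx A.
Proof.
apply/matrixP => i j; rewrite adjmxE !mxE rmorph_sum; apply: eq_bigr => k _.
by rewrite !adjmxE rmorphM mulrC.
Qed.

Lemma adjmx_tC m n (A : 'M[C]_(m, n)) : adjmx A = (A ^t*)%sesqui.
Proof. by rewrite /adjmx map_trmx. Qed.

Lemma adjmx_tens m n p r (A : 'M[C]_(m, n)) (B : 'M[C]_(p, r)) :
  adjmx (A *t B) = adjmx A *t adjmx B.
Proof.
apply/matrixP => i j.
case: (mxtens_indexP i) => i1 i2; case: (mxtens_indexP j) => j1 j2.
by rewrite tensmxE !adjmxE tensmxE rmorphM.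
Qed.

Definition bf n (A : 'M[C]_n) (x y : 'cV[C]_n) := (adjmx x *m A *m y) 0 0.

Lemma bfE n (A : 'M[C]_n) x y :
  bf A x y = \sum_j \sum_i Num.conj (x i 0) * A i j * y j 0.
Proof.
rewrite /bf mxE; apply: eq_bigr => j _; rewrite mxE mulr_suml.
by apply: eq_bigr => i _; rewrite !mxE.
Qed.

Lemma bf_expand n (A : 'M[C]_n) x y c :
  q A (x + c *: y) = bf A x x + c * bf A x y + Num.conj c * bf A y x
     + Num.conj c * c * bf A y y.
Proof.
rewrite qE !bfE !mulr_sumr -!big_split; apply: eq_bigr => j _.
rewrite !mulr_sumr -!big_split; apply: eq_bigr => i _.
rewrite !mxE rmorphD rmorphM /=; ring.
Qed.

Lemma bf_delta n (A : 'M[C]_n) a b : bf A (delta_mx a 0) (delta_mx b 0) = A a b.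
Proof.
rewrite bfE (bigD1 b) //= [X in _ + X]big1 ?addr0; last first.
  move=> j /negbTE jk; rewrite big1 // => i _.
  by rewrite !mxE jk /= mulr0.
rewrite (bigD1 a) //= big1 ?addr0; last first.
  by move=> i /negbTE ik; rewrite !mxE ik /= conjC0 !mul0r.
by rewrite !mxE !eqxx /= conjC1 mul1r mulr1.
Qed.

Lemma polar n (H : 'M[C]_n) : (forall v, q H v = 0) -> H = 0.
Proof.
move=> H0; have Hd : forall a, H a a = 0.
  by move=> a; rewrite -(q_delta H a) H0.
apply/matrixP => a b; rewrite mxE.
have e1 := H0 (delta_mx a 0 + 1 *: delta_mx b 0).
have e2 := H0 (delta_mx a 0 + 'i *: delta_mx b 0).
rewrite bf_expand !bf_delta !Hd in e1.
rewrite bf_expand !bf_delta !Hd in e2.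
rewrite conjC1 in e1; rewrite conjCi in e2.
have : 'i * (H a b - H b a) = 0 by rewrite -e2; ring.
move/eqP; rewrite mulf_eq0 (negbTE (neq0Ci _)) /= subr_eq0 => /eqP hab.
have : H a b *+ 2 = 0 by rewrite -e1 hab; ring.
by move/eqP; rewrite mulrn_eq0 /= => /eqP.
Qed.

Lemma q_adj n (Q : 'M[C]_n) v : q (adjmx Q) v = Num.conj (q Q v).
Proof.
rewrite !qE rmorph_sum exchange_big; apply: eq_bigr => j _.
rewrite rmorph_sum; apply: eq_bigr => i _.
by rewrite adjmxE !rmorphM /= conjCK; ring.
Qed.

Lemma psd_herm n (Q : 'M[C]_n) : psd Q -> adjmx Q = Q.
Proof.
move=> pQ; apply/eqP; rewrite eq_sym -subr_eq0; apply/eqP; apply: polar => v.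
by rewrite qB q_adj geC0_conj ?subrr // pQ.
Qed.

Lemma psd_gram m n (B : 'M[C]_(m, n)) : psd (adjmx B *m B).
Proof.
move=> v; rewrite mulmxA -[adjmx v *m adjmx B *m B *m v]mulmxA -adjmxM.
rewrite mxE; apply: sumr_ge0 => i _; rewrite adjmxE.
by rewrite mulrC; apply: mul_conjC_ge0.
Qed.

Lemma q_conj n (P M : 'M[C]_n) v : P *m adjmx P = 1%:M ->
  q (adjmx P *m M *m P) (adjmx P *m v) = q M v.
Proof.
move=> PP; rewrite /q adjmxM adjmxK !mulmxA.
rewrite -[adjmx v *m P *m adjmx P]mulmxA PP mulmx1.
by rewrite -[adjmx v *m M *m P *m adjmx P]mulmxA PP mulmx1.
Qed.

Lemma gram n (Q : 'M[C]_n) : psd Q -> exists B : 'M[C]_n, Q = adjmx B *m B.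
Proof.
move=> pQ; have hQ := psd_herm pQ.
have nQ : Q \is normalmx by apply/normalmxP; rewrite -adjmx_tC hQ.
move/orthomx_spectralP: nQ.
set P := spectralmx Q; set D := spectral_diag Q.
have Pu : P \is unitarymx by apply: spectral_unitarymx.
rewrite invmx_unitary // -adjmx_tC => QE.
have PP : P *m adjmx P = 1%:M by rewrite adjmx_tC; apply/unitarymxP.
have D0 : forall k, 0 <= D 0 k.
  move=> k; have := pQ (adjmx P *m delta_mx k 0).
  by rewrite -/(q _ _) {1}QE q_conj // q_delta mxE eqxx mulr1n.
exists (diag_mx (\row_k sqrtC (D 0 k)) *m P).
rewrite adjmxM !mulmxA -[adjmx P *m _ *m _]mulmxA.
have -> : adjmx (diag_mx (\row_k sqrtC (D 0 k))) *m diag_mx (\row_k sqrtC (D 0 k))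
    = diag_mx D.
  apply/matrixP => i j; rewrite !mxE.
  rewrite (bigD1 i) //= big1 ?addr0; last first.
    move=> k /negbTE ki; rewrite !mxE.
    have -> : (k == i) = false by exact: ki.
    by rewrite mulr0n conjC0 mul0r.
  rewrite !mxE eqxx mulr1n.
  by rewrite mulrnAr geC0_conj ?sqrtC_ge0 // -expr2 sqrtCK.
exact: QE.
Qed.

Lemma psd_tens m n (A : 'M[C]_m) (B : 'M[C]_n) : psd A -> psd B -> psd (A *t B).
Proof.
move=> /gram [X ->] /gram [Y ->].
by rewrite -tensmx_mul -adjmx_tens; apply: psd_gram.
Qed.

End G.

Section P.
Variable R : realType.
Local Notation C := (R[i]).

Lemma sum_tens m n (F : 'I_(m * n) -> C) :
  \sum_k F k = \sum_i \sum_j F (mxtens_index (i, j)).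
Proof.
rewrite pair_big /= (reindex (@mxtens_index m n)) /=; last first.
  by exists (@mxtens_unindex m n) => x _; rewrite (mxtens_indexK, mxtens_unindexK).
by apply: eq_bigr => -[i j] _.
Qed.

Lemma tensmxBl m n p r (A B : 'M[C]_(m, n)) (D : 'M[C]_(p, r)) :
  (A - B) *t D = A *t D - B *t D.
Proof. by apply/matrixP => i j; rewrite !mxE mulrBl. Qed.

Lemma tensmxBr m n p r (A : 'M[C]_(m, n)) (B D : 'M[C]_(p, r)) :
  A *t (B - D) = A *t B - A *t D.
Proof. by apply/matrixP => i j; rewrite !mxE mulrBr. Qed.

Lemma tensmxZ m n p r a b (A : 'M[C]_(m, n)) (B : 'M[C]_(p, r)) :
  (a *: A) *t (b *: B) = (a * b) *: (A *t B).
Proof. by apply/matrixP => i j; rewrite !mxE; ring. Qed.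

Lemma qD n (A B : 'M[C]_n) v : q (A + B) v = q A v + q B v.
Proof. by rewrite /q mulmxDr mulmxDl !mxE. Qed.

Lemma psdD n (A B : 'M[C]_n) : psd A -> psd B -> psd (A + B).
Proof. by move=> pA pB v; rewrite -/(q _ _) qD addr_ge0 // ?pA ?pB. Qed.

Lemma psd_loewner n (A B : 'M[C]_n) : psd A -> loewner A B -> psd B.
Proof. by move=> pA lw; rewrite -(subrK A B); apply: psdD. Qed.

Lemma loewner_tens m n (A1 B1 : 'M[C]_m) (A2 B2 : 'M[C]_n) :
  psd A1 -> psd A2 -> loewner A1 B1 -> loewner A2 B2 ->
  loewner (A1 *t A2) (B1 *t B2).
Proof.
move=> p1 p2 l1 l2; rewrite /loewner.
have -> : B1 *t B2 - A1 *t A2 = (B1 - A1) *t B2 + A1 *t (B2 - A2).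
  by rewrite tensmxBl tensmxBr addrA subrK.
apply: psdD; apply: psd_tens => //; exact: psd_loewner l2.
Qed.

Lemma tr_tens m n (A : 'M[C]_m) (B : 'M[C]_n) : \tr (A *t B) = \tr A * \tr B.
Proof.
rewrite /mxtrace sum_tens mulr_suml; apply: eq_bigr => i _.
by rewrite mulr_sumr; apply: eq_bigr => j _; rewrite tensmxE.
Qed.

Lemma diag_tens m n (A : 'M[C]_m) (B : 'M[C]_n) :
  is_diag_mx A -> is_diag_mx B -> is_diag_mx (A *t B).
Proof.
move=> /is_diag_mxP dA /is_diag_mxP dB; apply/is_diag_mxP => i j.
case: (mxtens_indexP i) => i1 i2; case: (mxtens_indexP j) => j1 j2 ij.
rewrite tensmxE.
have [e1|n1] := eqVneq i1 j1; last by rewrite dA ?mul0r.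
have [e2|n2] := eqVneq i2 j2; last by rewrite dB ?mulr0.
by move: ij; rewrite e1 e2 eqxx.
Qed.

Lemma feas_tens m n (r1 s1 : 'M[C]_m) (r2 s2 : 'M[C]_n) l1 l2 :
  psd r1 -> psd r2 -> feas r1 s1 l1 -> feas r2 s2 l2 ->
  feas (r1 *t r2) (s1 *t s2) (l1 + l2).
Proof.
move=> p1 p2 [[[ps1 t1] d1] [l10 lw1]] [[[ps2 t2] d2] [l20 lw2]].
split; [split; [split|] | split].
- exact: psd_tens.
- by rewrite tr_tens t1 t2 mulr1.
- exact: diag_tens.
- exact: addr_ge0.
- rewrite powRD ?pnatr_eq0 ?implybT // rmorphM -tensmxZ.
  exact: loewner_tens.
Qed.

End P.

Section S.
Variable R : realType.
Local Notation C := (R[i]).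

Definition tv m n (u : 'cV[C]_m) (w : 'cV[C]_n) : 'cV[C]_(m * n) :=
  \col_k (u (@mxtens_unindex m n k).1 0 * w (@mxtens_unindex m n k).2 0).

Lemma tvE m n (u : 'cV[C]_m) (w : 'cV[C]_n) i j :
  tv u w (mxtens_index (i, j)) 0 = u i 0 * w j 0.
Proof. by rewrite !mxE mxtens_indexK. Qed.

Lemma q_tens m n (A : 'M[C]_m) (B : 'M[C]_n) u w :
  q (A *t B) (tv u w) = q A u * q B w.
Proof.
rewrite !qE sum_tens mulr_suml; apply: eq_bigr => j1 _.
under eq_bigr => j2 _ do rewrite sum_tens.
rewrite exchange_big mulr_suml; apply: eq_bigr => i1 _.
rewrite mulr_sumr; apply: eq_bigr => j2 _.
rewrite mulr_sumr; apply: eq_bigr => i2 _.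
rewrite tensmxE !tvE rmorphM /=; ring.
Qed.

Lemma q_diag_tens m n (D : 'M[C]_(m * n)) u w :
  (forall i j, i != j -> D i j = 0) ->
  q D (tv u w) = \sum_i \sum_j Num.conj (u i 0 * w j 0) *
     D (mxtens_index (i, j)) (mxtens_index (i, j)) * (u i 0 * w j 0).
Proof.
move=> H; rewrite q_diag // sum_tens; apply: eq_bigr => i _.
by apply: eq_bigr => j _; rewrite !tvE.
Qed.

Lemma diagZ n a (f : 'I_n -> C) :
  diag_mx (\row_i (a * f i)) = a *: diag_mx (\row_i f i).
Proof. by apply/matrixP => i j; rewrite !mxE mulrnAr. Qed.

Lemma fin_of (x : \bar R) l : (0 <= x)%E -> (x <= l%:E)%E ->
  exists c, x = c%:E.
Proof.
case: x => [c _ _|_|]; first by exists c.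
  by rewrite leye_eq.
by [].
Qed.

Lemma superadd m n (r1 : 'M[C]_m) (r2 : 'M[C]_n) s l :
  is_state r1 -> is_state r2 -> feas (r1 *t r2) s l ->
  (Cmax r1 + Cmax r2 <= l%:E)%E.
Proof.
move=> [p1 t1] [p2 t2] [[[ps tr] dg] [l0 lw]].
set t := ((2:R) `^ l)%:C%C.
set Dl := t *: s.
have Doff : forall i j, i != j -> Dl i j = 0.
  by move/is_diag_mxP: dg => dg i j ij; rewrite mxE dg // mulr0.
pose dl i j := Dl (mxtens_index (i, j)) (mxtens_index (i, j)).
have t0 : 0 <= t by rewrite ler0c powR_ge0.
have dl0 : forall i j, 0 <= dl i j.
  by move=> i j; rewrite /dl mxE mulr_ge0 // psd_diag.
pose e (w : 'cV[C]_n) i := \sum_j Num.conj (w j 0) * dl i j * w j 0.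
have e0 : forall w i, 0 <= e w i.
  move=> w i; apply: sumr_ge0 => j _.
  by rewrite mulrAC mulr_ge0 // mulrC mul_conjC_ge0.
have F1 : forall u w, q r1 u * q r2 w <= q (diag_mx (\row_i e w i)) u.
  move=> u w; rewrite -q_tens.
  apply: (le_trans (proj1 (loewnerP _ _) lw (tv u w))).
  rewrite q_diag_tens // q_diag; last by move=> i j /negbTE ij; rewrite !mxE ij.
  rewrite le_eqVlt; apply/orP; left; apply/eqP.
  apply: eq_bigr => i _; rewrite !mxE eqxx mulr1n mulr_sumr mulr_suml.
  apply: eq_bigr => j _; rewrite rmorphM /= /dl; ring.
have KL1 : forall w, 0 < q r2 w -> exists l', (Cmax r1 <= l'%:E)%E /\
    ((2:R) `^ l')%:C%C = (q r2 w)^-1 * \sum_i e w i.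
  move=> w c0; rewrite mulr_sumr.
  apply: KL => //.
    by move=> i; rewrite mulr_ge0 // invr_ge0 ltW.
  apply/loewnerP => u; rewrite diagZ qZ.
  have h := ler_wpM2l (x := (q r2 w)^-1) _ (F1 u w).
  rewrite [q r1 u * _]mulrC mulKf ?gt_eqF // in h; apply: h.
  by rewrite invr_ge0 ltW.
have [k hk] : exists k, r2 k k != 0.
  case: (pselect (exists k, r2 k k != 0)) => // nk; exfalso.
  have : \tr r2 = 0.
    rewrite /mxtrace big1 // => k _; apply/eqP; apply/negPn/negP => h.
    by apply: nk; exists k.
  by rewrite t2 => /eqP; rewrite oner_eq0.
have ck : 0 < q r2 (delta_mx k 0) by rewrite q_delta lt_def hk psd_diag.
have [l1 [Hl1 _]] := KL1 _ ck.
have [c1 E1] := fin_of (Cmax_ge0 r1) Hl1.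
set m1 := (2:R) `^ c1.
have m1p : 0 < m1 by apply: powR_gt0.
have m1C : (0:R)%:C%C < m1%:C%C by rewrite ltcR.
pose T j := \sum_i dl i j.
have T0 : forall j, 0 <= T j by move=> j; apply: sumr_ge0 => i _; apply: dl0.
have F2s : forall w, \sum_i e w i = q (diag_mx (\row_j T j)) w.
  move=> w; rewrite q_diag; last by move=> i j /negbTE ij; rewrite !mxE ij.
  rewrite exchange_big; apply: eq_bigr => j _.
  by rewrite !mxE eqxx mulr1n mulr_sumr mulr_suml.
have F2 : forall w, m1%:C%C * q r2 w <= q (diag_mx (\row_j T j)) w.
  move=> w; have c0 := p2 w; rewrite -/(q _ _) in c0.
  case: (eqVneq (q r2 w) 0) => [->|cn0]; first by rewrite mulr0 q_diag_ge0.
  have cp : 0 < q r2 w by rewrite lt_def cn0 c0.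
  have [l' [Hl' El']] := KL1 _ cp.
  have c1l : c1 <= l' by rewrite -lee_fin -E1.
  have : m1%:C%C <= (q r2 w)^-1 * \sum_i e w i.
    by rewrite -El' lecR ler_powR // ler1n.
  move=> /(ler_wpM2r (ltW cp)).
  by rewrite mulrAC mulVf ?gt_eqF // mul1r -F2s.
have [l2 [Hl2 El2]] : exists l2, (Cmax r2 <= l2%:E)%E /\
    ((2:R)`^l2)%:C%C = (m1%:C%C)^-1 * \sum_j T j.
  rewrite mulr_sumr; apply: KL => //.
    by move=> j; rewrite mulr_ge0 // invr_ge0 ltW.
  apply/loewnerP => w; rewrite diagZ qZ.
  have h := ler_wpM2l (x := (m1%:C%C)^-1) _ (F2 w).
  rewrite mulKf ?gt_eqF // in h; apply: h.
  by rewrite invr_ge0 ltW.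
have sumT : \sum_j T j = t.
  have : \tr Dl = t by rewrite mxtraceZ tr mulr1.
  rewrite /mxtrace (sum_tens (fun k => Dl k k)) => <-.
  by rewrite /T exchange_big.
have [c2 E2] := fin_of (Cmax_ge0 r2) Hl2.
rewrite E1 E2 -EFinD lee_fin.
have c2l : c2 <= l2 by rewrite -lee_fin -E2.
have El2' : (2:R) `^ l2 = m1^-1 * 2 `^ l.
  by apply: complexI; rewrite El2 sumT rmorphM fmorphV.
have h : m1 * 2 `^ c2 <= 2 `^ l.
  have := ler_powR (a := (2:R)) _ c2l; rewrite El2' => /(_ (ler1n _ 2)) h.
  have := ler_wpM2l (ltW m1p) h.
  by rewrite mulrA mulfV ?gt_eqF // mul1r.
rewrite /m1 -powRD ?pnatr_eq0 ?implybT // in h.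
have ln2 : 0 < ln (2:R) by apply: ln_gt0; apply: ltr1n.
have : ln ((2:R) `^ (c1 + c2)) <= ln (2 `^ l).
  by rewrite ler_ln // posrE powR_gt0.
by rewrite !ln_powR ler_pM2r.
Qed.

End S.

Theorem corollary3 (R : realType) (n1 n2 : nat)
    (rho1 : 'M[R[i]]_n1) (rho2 : 'M[R[i]]_n2) :
  is_state rho1 -> is_state rho2 ->
  Cmax (rho1 *t rho2) = (Cmax rho1 + Cmax rho2)%E.
Proof.
move=> s1 s2; apply/le_anti/andP; split; last first.
  by apply: Cmax_ge => s l f; exact: superadd s1 s2 f.
have g1 := Cmax_ge0 rho1; have g2 := Cmax_ge0 rho2.
case E1: (Cmax rho1) g1 => [c1| |] // g1.
  case E2: (Cmax rho2) g2 => [c2| |] // g2.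
    have key : forall e, 0 < e -> (Cmax (rho1 *t rho2) <= (c1 + c2 + e)%:E)%E.
      move=> e e0.
      have h1 : (Cmax rho1 < (c1 + e / 2)%:E)%E by rewrite E1 lte_fin; lra.
      have h2 : (Cmax rho2 < (c2 + e / 2)%:E)%E by rewrite E2 lte_fin; lra.
      have [sa [la [fa la_lt]]] := Cmax_lt h1.
      have [sb [lb [fb lb_lt]]] := Cmax_lt h2.
      apply: (le_trans (Cmax_le (feas_tens s1.1 s2.1 fa fb))).
      rewrite lee_fin; rewrite lte_fin in la_lt; rewrite lte_fin in lb_lt; lra.
    have [a Ea] := fin_of (Cmax_ge0 _) (key 1 ltr01).
    rewrite Ea -EFinD lee_fin; apply/ler_addgt0Pr => e e0.
    by have := key e e0; rewrite Ea lee_fin.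
  by rewrite addey // leey.
by rewrite addye ?leey //; case: (Cmax rho2) g2.
Qed.
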